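(* Let $\mathcal{A}$ be an $S$-ring over a group $G$ of prime order $p$. Suppose that $p\leq 3$ or $\mathrm{rk}(\mathcal{A})>2$. Then $\mathrm{Aut}(\mathcal{A})$ is 2-isolated.
   Context: Let $G$ be a finite group with identity $e$; for $X\subseteq G$ write $\underline{X}=\sum_{x\in X}x\in\mathbb{Z}G$. An $S$-ring over $G$ is a subring $\mathcal{A}\subseteq\mathbb{Z}G$ for which there is a partition $\mathcal{S}(\mathcal{A})$ of $G$ (basic sets) with $\{e\}\in\mathcal{S}(\mathcal{A})$, closed under $X\mapsto X^{-1}$, and $\mathcal{A}=\mathrm{Span}_{\mathbb{Z}}\{\underline{X}:X\in\mathcal{S}(\mathcal{A})\}$; $\mathrm{rk}(\mathcal{A})=|\mathcal{S}(\mathcal{A})|$. For $X\subseteq G$ let $R(X)=\{(g,xg):x\in X,g\in G\}$. The automorphism group $\mathrm{Aut}(\mathcal{A})$ is the group of all permutations $f$ of $G$ with $R(X)^f=R(X)$ for every $X\in\mathcal{S}(\mathcal{A})$. Two permutation groups $K,K'\leq\mathrm{Sym}(\Omega)$ are 2-equivalent if they have the same orbits on $\Omega^2$; $K$ is 2-isolated if $K$ is the only subgroup of $\mathrm{Sym}(\Omega)$ that is 2-equivalent to $K$. *)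

(* Defs.v *)
From mathcomp Require Import all_boot all_fingroup.
Set Implicit Arguments.
Unset Strict Implicit.
Unset Printing Implicit Defensive.

Local Open Scope group_scope.

Section SRing.
Variable gT : finGroupType.

(* Coefficient of g in the group-ring product X * Y (underlined sets):
   the number of pairs (x, y) in X x Y with x * y = g. *)
Definition prod_coef (X Y : {set gT}) (g : gT) : nat :=
  #|[set xy in setX X Y | xy.1 * xy.2 == g]|.

(* S is the set of basic sets of an S-ring over the group gT (G = [set: gT]):
   a partition of G containing {e}, closed under inversion, and whose
   Z-span of the elements \underline{X} is closed under multiplication in ZG
   (i.e. each coefficient of \underline{X} \underline{Y} is constant on every
   basic set).  The span is then automatically an additive subgroup
   containing 1 = \underline{{e}}. *)
Definition is_Sring (S : {set {set gT}}) : Prop :=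
  [/\ partition S [set: gT],
      [set 1] \in S,
      (forall X, X \in S -> X^-1 \in S) &
      (forall X Y Z, X \in S -> Y \in S -> Z \in S ->
         forall z z', z \in Z -> z' \in Z -> prod_coef X Y z = prod_coef X Y z')].

Definition Rel (X : {set gT}) : {set gT * gT} :=
  [set (g, x * g) | x in X, g in [set: gT]].

Definition AutS (S : {set {set gT}}) : {set {perm gT}} :=
  [set f : {perm gT} |
     [forall X in S, [set (f ab.1, f ab.2) | ab in Rel X] == Rel X]].

End SRing.

Section TwoClosure.
Variable T : finType.

Definition orbits2 (K : {set {perm T}}) : {set {set T * T}} :=
  [set [set (k ab.1, k ab.2) | k : {perm T} in K] | ab in [set: T * T]].

Definition two_equivalent (K K' : {set {perm T}}) : Prop :=
  orbits2 K = orbits2 K'.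

Definition two_isolated (K : {set {perm T}}) : Prop :=
  forall K' : {group {perm T}}, two_equivalent K' K -> (K' : {set {perm T}}) = K.

End TwoClosure.

(* Main.v *)
Require Import Defs.
From mathcomp Require Import all_boot all_fingroup.
From mathcomp Require Import all_order all_algebra all_field all_solvable.
From mathcomp Require Import zify ring lra.
Set Implicit Arguments. Unset Strict Implicit. Unset Printing Implicit Defensive.
Import GRing.Theory.

Section FCore.
Variable p : nat.
Hypothesis p_pr : prime p.
Local Notation F := 'F_p.
Local Open Scope ring_scope.

Definition mom (a : F -> F) (i : nat) : F := \sum_(z : F) a z * z ^+ i.
Definition star (a phi : F -> F) (y : F) : F := \sum_(z : F) a z * phi (y + z).
Definition conv (a b : F -> F) (w : F) : F := \sum_(z : F) a z * b (w - z).
Definition Comm (s a : F -> F) := forall phi y, star a (phi \o s) y = star a phi (s y).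

Lemma star_ext a f g y : (forall x, f x = g x) -> star a f y = star a g y.
Proof. by move=> e; apply: eq_bigr => z _; rewrite e. Qed.

Lemma star_conv a b phi y : star (conv a b) phi y = star a (star b phi) y.
Proof.
rewrite /star /conv.
under eq_bigr do rewrite mulr_suml.
rewrite exchange_big /=; apply: eq_bigr => z _.
rewrite mulr_sumr (reindex_inj (addIr z)) /=.
by apply: eq_bigr => u _; rewrite addrK mulrA addrA [y + u + z]addrAC.
Qed.

Lemma Comm_conv s a b : Comm s a -> Comm s b -> Comm s (conv a b).
Proof.
move=> ha hb phi y; rewrite !star_conv.
rewrite (star_ext _ _ (hb phi)).
exact: (ha (star b phi)).
Qed.

Lemma Comm_lin s a b c d : Comm s a -> Comm s b -> Comm s (fun z => c * a z + d * b z).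
Proof.
move=> ha hb phi y.
have E f y' : star (fun z => c * a z + d * b z) f y' = c * star a f y' + d * star b f y'.
  rewrite /star !mulr_sumr -big_split /=; apply: eq_bigr => z _; ring.
by rewrite !E ha hb.
Qed.


Lemma mom_conv a b i :
  mom (conv a b) i = \sum_(k < i.+1) 'C(i, k)%:R * mom a k * mom b (i - k).
Proof.
rewrite /mom /conv.
under eq_bigr do rewrite mulr_suml.
rewrite exchange_big /=.
have -> : \sum_(k < i.+1) 'C(i, k)%:R * (\sum_z a z * z ^+ k) * (\sum_z b z * z ^+ (i - k))
   = \sum_(z : F) \sum_(u : F) \sum_(k < i.+1) a z * b u * ((u ^+ (i - k) * z ^+ k) *+ 'C(i, k)).
  symmetry.
  under eq_bigr do rewrite exchange_big /=.
  rewrite exchange_big /=; apply: eq_bigr => k _.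
  rewrite -mulrA big_distrlr mulr_sumr; apply: eq_bigr => z _.
  rewrite mulr_sumr; apply: eq_bigr => u _.
  rewrite -mulr_natl /=; ring.
apply: eq_bigr => z _.
rewrite (reindex_inj (addIr z)) /=.
apply: eq_bigr => u _.
by rewrite addrK exprDn mulr_sumr.
Qed.

Definition hasval (a : F -> F) (v : nat) := (forall k, (k < v)%N -> mom a k = 0) /\ mom a v != 0.

Lemma ndvd_fact j : (j < p)%N -> ~~ (p %| j`!)%N.
Proof.
elim: j => [|j IH] jp; first by rewrite fact0 dvdn1; case: eqP (prime_gt1 p_pr) => // ->.
rewrite factS Euclid_dvdM // negb_or IH ?(ltnW jp) // andbT gtnNdvd //.
Qed.

Lemma binF_neq0 j k : (j < p)%N -> (k <= j)%N -> ('C(j, k)%:R : F) != 0.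
Proof.
move=> jp kj.
have h := val_Fp_nat p_pr ('C(j,k)).
apply/eqP => e; rewrite e /= in h.
have pd : (p %| 'C(j, k))%N by rewrite /dvdn -h.
have := ndvd_fact jp; rewrite -(bin_fact kj) dvdn_mulr //.
Qed.

Lemma hasval_conv a b al be : hasval a al -> hasval b be -> (al + be < p)%N ->
  hasval (conv a b) (al + be).
Proof.
case=> ha0 ha1 [hb0 hb1] lt; split.
  move=> i lti; rewrite mom_conv big1 // => k _.
  case: (ltnP k al) => hk; first by rewrite ha0 // mulr0 mul0r.
  move: (ltn_ord k) => hk2; rewrite hb0 ?mulr0 //; nia.
have hal : (al < (al + be).+1)%N by rewrite ltnS leq_addr.
rewrite mom_conv (bigD1 (Ordinal hal)) //= big1 ?addr0.
  by rewrite addKn !mulf_neq0 // binF_neq0 // leq_addr.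
move=> k /eqP nk; have {}nk : (val k != al) by apply/eqP => e; apply: nk; apply: val_inj.
case: (ltnP k al) => hk; first by rewrite ha0 // mulr0 mul0r.
move: (ltn_ord k) nk => hk2 /eqP nk; rewrite hb0 ?mulr0 //; simpl in *; nia.
Qed.

Lemma cardF : #|F| = p. Proof. exact: card_Fp. Qed.

Lemma star_monom b m y :
  star b (fun x => x ^+ m) y = (\poly_(k < m.+1) ('C(m, k)%:R * mom b (m - k))).[y].
Proof.
rewrite horner_poly /star.
under eq_bigr do rewrite addrC exprDn mulr_sumr.
rewrite exchange_big /=; apply: eq_bigr => k _.
rewrite /mom mulr_sumr mulr_suml; apply: eq_bigr => z _.
rewrite -mulr_natl; ring.
Qed.

Lemma poly_fun_eq (P Q : {poly F}) : (size P <= p)%N -> (size Q <= p)%N ->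
  (forall y, P.[y] = Q.[y]) -> P = Q.
Proof.
move=> hP hQ e; apply/eqP; rewrite -subr_eq0; apply/negPn/negP => nz.
have hall : all (root (P - Q)) (enum F).
  by apply/allP => y _; rewrite rootE hornerD hornerN e subrr.
have := max_poly_roots nz hall (enum_uniq F).
rewrite -cardE cardF.
have hs : (size (P - Q)%R <= p)%N.
  by rewrite (leq_trans (size_polyD _ _)) // geq_max hP size_polyN.
by rewrite ltnNge hs.
Qed.

Lemma p_gt1 : (1 < p)%N. Proof. exact: prime_gt1. Qed.

Lemma fermat (x : F) : x != 0 -> x ^+ p.-1 = 1.
Proof.
move=> nx; apply: (mulfI nx); rewrite mulr1 -exprS prednK ?prime_gt0 //.
by have := expf_card x; rewrite cardF.
Qed.

Lemma interp (phi : F -> F) : exists P : {poly F}, (size P <= p)%N /\ forall y, phi y = P.[y].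
Proof.
exists (\sum_(c : F) phi c *: (1 - ('X - c%:P) ^+ p.-1)); split.
  rewrite (leq_trans (size_sum _ _ _)) //; apply/bigmax_leqP => c _.
  rewrite (leq_trans (size_scale_leq _ _)) // (leq_trans (size_polyD _ _)) //.
  by rewrite size_polyN size_exp_XsubC prednK ?prime_gt0 // geq_max size_poly1 prime_gt0 // leqnn.
move=> y; rewrite horner_sum (bigD1 y) //= big1 ?addr0.
  rewrite hornerZ hornerD hornerN horner_exp hornerXsubC subrr expr0n /= hornerC.
  have -> : (p.-1 == 0)%N = false by move: p_gt1; case: (p) => [|[|]].
  by rewrite subr0 mulr1.

move=> c nc; rewrite hornerZ hornerD hornerN horner_exp hornerXsubC fermat ?hornerC ?subrr ?mulr0 //.
by rewrite subr_eq0 eq_sym.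
Qed.

Definition Dn (n : nat) (phi : F -> F) :=
  exists P : {poly F}, (size P <= n.+1)%N /\ forall y, phi y = P.[y].

Definition Rpol b i := \poly_(k < i.+1) ('C(i, k)%:R * mom b (i - k)).

Lemma monom_trunc b v i : hasval b v ->
  Rpol b i = \poly_(k < (i - v).+1) ('C(i, k)%:R * mom b (i - k)).
Proof.
case=> h0 _; apply/polyP => k; rewrite !coef_poly.
case: (ltnP k (i - v).+1) => h1; first by rewrite (leq_trans h1) // ltnS leq_subr.
case: ifP => // h2; rewrite h0 ?mulr0 //; nia.
Qed.

Lemma star_Dn b v phi : hasval b v -> Dn (p.-1 - v) (star b phi).
Proof.
move=> hb; case: (interp phi) => P [sP eP].
exists (\sum_(i < size P) P`_i *: \poly_(k < (i - v).+1) ('C(i, k)%:R * mom b (i - k))).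
split.
  rewrite (leq_trans (size_sum _ _ _)) //; apply/bigmax_leqP => i _.
  rewrite (leq_trans (size_scale_leq _ _)) // (leq_trans (size_poly _ _)) //.
  by move: (ltn_ord i) sP; rewrite ltnS; nia.
move=> y; rewrite horner_sum.
under eq_bigr do rewrite hornerZ -monom_trunc // /Rpol -star_monom.
have -> : star b phi y = \sum_(z : F) \sum_(i < size P) b z * (P`_i * (y + z) ^+ i).
  by apply: eq_bigr => z _; rewrite eP horner_coef mulr_sumr.
rewrite exchange_big /=; apply: eq_bigr => i _.
rewrite /star mulr_sumr; apply: eq_bigr => z _; ring.
Qed.

Lemma size_Rpol b v j : hasval b v -> (j + v < p)%N -> size (Rpol b (j + v)) = j.+1.
Proof.
move=> hb jv; rewrite (monom_trunc _ hb) addnK size_poly_eq //= addKn.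
by case: hb => _ hb; rewrite mulf_neq0 // binF_neq0 // leq_addr.
Qed.

Lemma core s b v : Comm s b -> hasval b v -> (1 <= p.-1 - v)%N ->
  (2 * (p.-1 - v) <= p.-1)%N -> exists c0 c1, forall y, s y = c0 + c1 * y.
Proof.
move=> hc hb n1 n2; set n := (p.-1 - v)%N in n1 n2.
have pp : p = p.-1.+1 by rewrite prednK // prime_gt0.
case: (interp s) => P [sP eP].
have key : forall j, (1 <= j <= n)%N -> ((size P).-1 * j <= p.-1)%N -> ((size P).-1 * j <= n)%N.
  move=> j /andP[j1 jn] hle.
  case: (star_Dn ((fun x => x ^+ (j + v)) \o s) hb) => Q [sQ eQ].
  have jvp : (j + v < p)%N by move: jn; rewrite /n; move: p_gt1; nia.
  have e : forall y, (Rpol b (j + v) \Po P).[y] = Q.[y].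
    by move=> y; rewrite -eQ hc star_monom horner_comp -eP.
  have sc : (size (Rpol b (j + v) \Po P) <= p)%N.
    rewrite (leq_trans (size_comp_poly_leq _ _)) // size_Rpol //= mulnC.
    by move: hle p_gt1 pp; move: (_ * j)%N => x; clear; lia.
  have := poly_fun_eq sc (leq_trans sQ _) e.
  have -> : (n.+1 <= p)%N by rewrite /n; move: p_gt1; nia.
  move=> /(_ isT) ec.
  have := size_comp_poly (Rpol b (j + v)) P.
  rewrite ec size_Rpol //= mulnC => <-.
  by move: sQ; rewrite /n; move: (size Q) (p.-1 - v)%N => a c; clear; lia.
have d1 : ((size P).-1 <= n)%N.
  have := key 1%N; rewrite !muln1; apply; first by rewrite leqnn n1.
  by move: sP pp; move: (size P) => a; clear; lia.
have d2 : ((size P).-1 <= 1)%N.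
  rewrite leqNgt; apply/negP => dg.
  set d := (size P).-1 in d1 dg key.
  have h1 := ltn_ceil n (ltnW dg).
  have h2 := leq_trunc_div n d.
  have := key (n %/ d).+1.
  have j1 : (n %/ d < n)%N by rewrite ltn_divLR ?(ltnW dg) //; move: n1 dg; nia.
  move: h1 h2 j1; rewrite mulSn mulnS [(n %/ d * d)%N]mulnC.
  move: (d * (n %/ d))%N (n %/ d)%N => m q.
  move: n2 d1 dg; clearbody n d; move: (n) (d) (p.-1) => N D P1.
  clear; lia.
exists P`_0, P`_1 => y.
rewrite eP (@horner_coef_wide _ 2 P y); last by move: d2; move: (size P) => a; clear; lia.
by rewrite big_ord_recl big_ord1 expr0 mulr1 expr1.
Qed.

Lemma double s : forall k a v, (p - v <= k)%N -> Comm s a -> hasval a v ->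
  (1 <= v)%N -> (v <= p.-2)%N ->
  exists b w, [/\ Comm s b, hasval b w, (1 <= p.-1 - w)%N & (2 * (p.-1 - w) <= p.-1)%N].
Proof.
have p1 := p_gt1.
elim=> [|k IH] a v hk ca ha v1 v2.
  by move: hk v2 p1; clear; lia.
case: (leqP (2 * (p.-1 - v)) p.-1) => h.
  by exists a, v; split => //; move: v2 p1; clear; lia.
apply: (IH (conv a a) (v + v)%N).
- by move: hk h v1 p1; clear; lia.
- exact: Comm_conv.
- by apply: hasval_conv => //; move: h p1; clear; lia.
- by move: v1; clear; lia.
- by move: h p1; clear; lia.
Qed.

Lemma sum_eval a (Q : {poly F}) :
  \sum_(z : F) a z * Q.[z] = \sum_(i < size Q) Q`_i * mom a i.
Proof.
under eq_bigr do rewrite horner_coef mulr_sumr.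
rewrite exchange_big /=; apply: eq_bigr => i _.
rewrite /mom mulr_sumr; apply: eq_bigr => z _; ring.
Qed.

Lemma mom_const a : (forall i, (i <= p.-2)%N -> mom a i = 0) -> forall x y, a x = a y.
Proof.
move=> h.
have E c : a c = \sum_(z : F) a z - mom a p.-1.
  have := sum_eval a (('X - c%:P) ^+ p.-1).
  rewrite size_exp_XsubC [RHS]big_ord_recr /= [X in _ = X + _]big1 ?add0r; last first.
    by move=> i _; rewrite h ?mulr0 //; have := ltn_ord i; move: p_gt1; clear; lia.
  have -> : (('X - c%:P) ^+ p.-1)`_p.-1 = 1.
    by have := lead_coef_exp ('X - c%:P) p.-1; rewrite lead_coefXsubC expr1n lead_coefE size_exp_XsubC.
  rewrite mul1r => <-.
  rewrite [X in _ = X - _](bigD1 c) //= [X in _ = _ - X](bigD1 c) //=.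
  rewrite horner_exp hornerXsubC subrr expr0n.
  have -> : (p.-1 == 0)%N = false by move: p_gt1; case: (p) => [|[|]].
  rewrite mulr0 add0r -addrA [X in _ - X](eq_bigr (fun z => a z)); first by rewrite subrr addr0.
  move=> z nz.
  by rewrite horner_exp hornerXsubC fermat ?mulr1 // subr_eq0.
by move=> x y; rewrite !E.
Qed.

Lemma exists_val a : mom a 0 = 0 -> (exists x y, a x != a y) ->
  exists v, [/\ hasval a v, (1 <= v)%N & (v <= p.-2)%N].
Proof.
move=> h0 [x [y nxy]].
have ex : exists i, (i <= p.-2)%N && (mom a i != 0).
  case: (boolP [exists i : 'I_(p.-1), mom a i != 0]).
    by case/existsP => i hi; exists i; rewrite hi andbT; have := ltn_ord i; move: p_gt1; clear; lia.
  move=> /existsPn hn; exfalso; move/negP: nxy; apply; apply/eqP; apply: mom_const => i hi.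
  have hi' : (i < p.-1)%N by move: hi p_gt1; clear; lia.
  by move: (hn (Ordinal hi')) => /negPn/eqP.
case: (ex_minnP ex) => v /andP[hv1 hv2] hmin.
exists v; split => //.
- split => // k kv; apply/eqP; apply/negPn/negP => nk.
  have := hmin k; rewrite nk andbT.
  have -> : (k <= p.-2)%N by move: kv hv1; clear; lia.
  by move=> /(_ isT); rewrite leqNgt kv.
- by case: v hv2 {hmin hv1} => //; rewrite h0 eqxx.
Qed.

Theorem affine_core s a : Comm s a -> mom a 0 = 0 -> (exists x y, a x != a y) ->
  exists c0 c1, forall y, s y = c0 + c1 * y.
Proof.
move=> ca h0 hne; case: (exists_val h0 hne) => v [hv v1 v2].
case: (double (leqnn _) ca hv v1 v2) => b [w [cb hw w1 w2]].
exact: (core cb hw w1 w2).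
Qed.
End FCore.


Section Transfer.
Variables (gT : finGroupType) (g : gT).
Hypothesis pr : prime #|gT|.
Hypothesis og : #[g]%g = #|gT|.
Local Notation n := #|gT|.
Local Notation F := 'F_n.
Local Open Scope ring_scope.

Definition E (z : F) : gT := (g ^+ (z : nat))%g.

Lemma valF (z : F) : (z < n)%N.
Proof. by apply: (leq_trans (ltn_ord z)); rewrite Fp_cast. Qed.

Lemma E_add z w : E (z + w) = (E z * E w)%g.
Proof.
rewrite /E -expgD -[in RHS]expg_mod_order og; congr (g ^+ _)%g.
by rewrite /=; congr (_ %% _)%N; exact: Fp_cast.
Qed.

Lemma E_inj : injective E.
Proof.
move=> z w /eqP; rewrite /E eq_expg_mod_order og !modn_small ?valF // => /eqP.
exact: val_inj.
Qed.

Lemma E_bij : bijective E.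
Proof. by apply: (inj_card_bij E_inj); rewrite card_Fp. Qed.

Definition L (x : gT) : F := odflt 0 [pick z | E z == x].

Lemma EL x : E (L x) = x.
Proof.
rewrite /L; case: pickP => [z /eqP //| h]; exfalso.
case: E_bij => L' _ h2; by move: (h (L' x)); rewrite h2 eqxx.
Qed.

Lemma LE z : L (E z) = z.
Proof. by apply: E_inj; rewrite EL. Qed.

Lemma E0 : E 0 = 1%g.
Proof. by rewrite /E /= expg0. Qed.

Lemma E1 : E 1 = g.
Proof. by rewrite /E /= Fp_cast // modn_small ?prime_gt1 // expg1. Qed.

Lemma E_sub z w : E (z - w) = (E z * (E w)^-1)%g.
Proof. by rewrite -[in RHS](subrK w z) [in RHS]E_add mulgK. Qed.

Lemma E_comm y z : (E y * E z = E z * E y)%g.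
Proof. by rewrite -!E_add addrC. Qed.

Definition sig (k : {perm gT}) (z : F) : F := L (k (E z)).

Lemma relP (X : {set gT}) (a b : gT) : ((a, b) \in Rel X) = (b * a^-1 \in X)%g.
Proof.
apply/imset2P/idP => [[x g0 hx _ [-> ->]] | h]; first by rewrite mulgK.
by exists (b * a^-1)%g a; rewrite ?inE ?mulgKV.
Qed.

Lemma autP (S : {set {set gT}}) (k : {perm gT}) (X : {set gT}) : k \in AutS S -> X \in S ->
  forall a b, (a, b) \in Rel X -> (k a, k b) \in Rel X.
Proof.
rewrite inE => /forall_inP h hX a b hab.
have /eqP <- := h X hX; apply/imsetP; by exists (a, b).
Qed.

Definition ind (X : {set gT}) (z : F) : F := (E z \in X)%:R.

Lemma star_ind X phi y : star (ind X) phi y = \sum_(z | E z \in X) phi (y + z).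
Proof.
rewrite /star [RHS]big_mkcond; apply: eq_bigr => z _; rewrite /ind.
by case: (E z \in X); rewrite ?mul1r ?mul0r.
Qed.

Lemma Comm_ind (S : {set {set gT}}) (k : {perm gT}) (X : {set gT}) : k \in AutS S -> X \in S -> Comm (sig k) (ind X).
Proof.
move=> hk hX phi y; rewrite !star_ind /=.
set A := [set z : F | E z \in X].
pose h z := sig k (y + z) - sig k y.
have hinj : injective h.
  move=> z w; rewrite /h => /addIr /(congr1 E); rewrite /sig !EL => /perm_inj /E_inj.
  exact: addrI.
have hA : forall z, z \in A -> h z \in A.
  move=> z; rewrite !inE /h E_sub /sig !EL => hz.
  have := autP hk hX (a := E y) (b := E (y + z)).
  by rewrite !relP E_add {1}E_comm mulgK; apply.
have himA : h @: A = A.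
  apply/eqP; rewrite eqEcard card_imset // leqnn andbT.
  by apply/subsetP => w /imsetP [z hz ->]; exact: hA.
rewrite (eq_bigl (fun z => z \in A)); last by move=> z; rewrite inE.
rewrite [RHS](eq_bigl (fun z => z \in A)); last by move=> z; rewrite inE.
rewrite -[in RHS]himA big_imset /=; last by move=> z w _ _; apply: hinj.
by apply: eq_bigr => z _; rewrite /h subrKC.
Qed.


Definition delta (z : F) : F := (z == 0)%:R.

Lemma sum_delta : \sum_(z : F) delta z = 1.
Proof.
rewrite (bigD1 0) //= big1 ?addr0 /delta ?eqxx //.
by move=> z /negbTE ->.
Qed.

Lemma Comm_delta s : Comm s delta.
Proof.
have H f y : star delta f y = f y.
  rewrite /star (bigD1 0) //= big1 ?addr0 /delta ?eqxx ?mul1r ?addr0 //.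
  by move=> z /negbTE ->; rewrite mul0r.
by move=> phi y; rewrite !H.
Qed.

Lemma sig_affine (S : {set {set gT}}) (k : {perm gT}) (X : {set gT}) (x y : gT) :
  k \in AutS S -> X \in S -> x \in X -> x != 1%g -> y \notin X -> y != 1%g ->
  exists c0 c1, forall z, sig k z = c0 + c1 * z.
Proof.
move=> hk hX hx nx hy ny.
pose sX := \sum_(z : F) ind X z.
pose a := fun z => 1 * ind X z + (- sX) * delta z.
apply: (@affine_core _ pr _ a).
- exact: Comm_lin (Comm_ind hk hX) (Comm_delta _).
- rewrite /mom /a; under eq_bigr do rewrite expr0 mulr1.
  by rewrite big_split /= -mulr_sumr -mulr_sumr sum_delta mul1r mulr1 addrN.
- exists (L x), (L y); rewrite /a /ind !EL hx (negbTE hy) /delta.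
  have -> : (L x == 0) = false by apply/negbTE; apply: contra nx => /eqP h; rewrite -(EL x) h E0.
  have -> : (L y == 0) = false by apply/negbTE; apply: contra ny => /eqP h; rewrite -(EL y) h E0.
  by rewrite !mulr0 !addr0 mulr1 oner_neq0.
Qed.

Lemma aut_det (S : {set {set gT}}) (X : {set gT}) (x y : gT) (k k' : {perm gT}) :
  X \in S -> x \in X -> x != 1%g -> y \notin X -> y != 1%g ->
  k \in AutS S -> k' \in AutS S -> k 1%g = k' 1%g -> k g = k' g -> k = k'.
Proof.
move=> hX hx nx hy ny hk hk' e1 eg.
case: (sig_affine hk hX hx nx hy ny) => c0 [c1 hc].
case: (sig_affine hk' hX hx nx hy ny) => d0 [d1 hd].
have s0 : sig k 0 = sig k' 0 by rewrite /sig E0 e1.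
have s1 : sig k 1 = sig k' 1 by rewrite /sig E1 eg.
have ec0 : c0 = d0 by move: s0; rewrite hc hd !mulr0 !addr0.
have ec1 : c1 = d1 by move: s1; rewrite hc hd !mulr1 ec0 => /addrI.
apply/permP => w; rewrite -(EL w).
have : sig k (L w) = sig k' (L w) by rewrite hc hd ec0 ec1.
by rewrite /sig => /(congr1 E); rewrite !EL.
Qed.

End Transfer.


Section Main.
Variables (gT : finGroupType) (S : {set {set gT}}).
Local Open Scope group_scope.

Lemma rel_inv (k : {perm gT}) X a b : k \in AutS S -> X \in S ->
  ((k a, k b) \in Rel X) = ((a, b) \in Rel X).
Proof.
move=> hk hX; apply/idP/idP; last exact: autP hk hX a b.
move: hk; rewrite inE => /forall_inP /(_ X hX) /eqP e h; rewrite -e in h.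
case/imsetP: h => [[c d] hcd [/perm_inj e1 /perm_inj e2]].
by rewrite e1 e2.
Qed.

Lemma one_aut : (1 : {perm gT}) \in AutS S.
Proof.
rewrite inE; apply/forall_inP => X _; apply/eqP/setP => ab.
apply/imsetP/idP => [[cd hcd ->] | h]; first by rewrite !perm1 -surjective_pairing.
by exists ab => //; rewrite !perm1 -surjective_pairing.
Qed.

Definition orb (H : {set {perm gT}}) (ab : gT * gT) :=
  [set (k ab.1, k ab.2) | k : {perm gT} in H].

Lemma orb_in (H : {set {perm gT}}) ab : orb H ab \in orbits2 H.
Proof. by apply/imsetP; exists ab. Qed.

Lemma orb_other (H H' : {set {perm gT}}) ab : orbits2 H = orbits2 H' ->
  exists cd, orb H ab = orb H' cd.
Proof.
move=> e; have := orb_in H ab; rewrite e => /imsetP [cd _ ->]; by exists cd.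
Qed.

Lemma sub1 (K' : {group {perm gT}}) : two_equivalent K' (AutS S) -> K' \subset AutS S.
Proof.
move=> heq; apply/subsetP => k hk.
rewrite inE; apply/forall_inP => X hX.
rewrite eqEcard card_imset ?leqnn ?andbT; last first.
  by move=> [a b] [c d] /= [/perm_inj -> /perm_inj ->].
apply/subsetP => _ /imsetP [[a b] hab ->] /=.
case: (orb_other (a, b) heq) => cd hcd.
have m1 : (a, b) \in orb K' (a, b) by apply/imsetP; exists 1; rewrite ?group1 ?perm1.
have m2 : (k a, k b) \in orb K' (a, b) by apply/imsetP; exists k.
rewrite hcd in m1 m2.
case/imsetP: m1 => h hh [ea eb]; case/imsetP: m2 => h' hh' [ea' eb'].
rewrite ea' eb' rel_inv //; rewrite ea eb rel_inv // in hab.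
Qed.


Lemma det_all (g : gT) : prime #|gT| -> #[g] = #|gT| -> partition S [set: gT] ->
  [set 1] \in S -> (#|gT| <= 3 \/ 2 < #|S|)%N ->
  forall k k' : {perm gT}, k \in AutS S -> k' \in AutS S -> k 1 = k' 1 -> k g = k' g -> k = k'.
Proof.
move=> pr og hpart h1 hcase k k' hk hk' e1 eg.
case: hcase => [p3 | hr].
  apply/permP => w; case: (eqVneq (k w) (k' w)) => // ne; exfalso.
  have g1 : g != 1 by rewrite -order_gt1 og prime_gt1.
  have w1 : w != 1 by apply: contraNneq ne => ->; rewrite e1.
  have wg : w != g by apply: contraNneq ne => ->; rewrite eg.
  have n1 : (k 1 != k g) by rewrite (inj_eq perm_inj) eq_sym.
  have n2 : (k 1 != k w) by rewrite (inj_eq perm_inj) eq_sym.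
  have n3 : (k 1 != k' w) by rewrite e1 (inj_eq perm_inj) eq_sym.
  have n4 : (k g != k w) by rewrite (inj_eq perm_inj) eq_sym.
  have n5 : (k g != k' w) by rewrite eg (inj_eq perm_inj) eq_sym.
  have u : uniq [:: k 1; k g; k w; k' w] by rewrite /= !inE !negb_or n1 n2 n3 n4 n5 ne.
  have := max_card (mem [:: k 1; k g; k w; k' w]); rewrite (card_uniqP u) /=.
  by move=> h; have := leq_trans h p3.
case/and3P: hpart => _ htriv h0.
have : (1 < #|S :\ [set 1%g]|)%N by move: hr; rewrite (cardsD1 [set 1%g] S) h1 add1n ltnS.
case/card_gt1P => X [Y [hX hY nXY]].
rewrite !in_setD1 in hX hY; case/andP: hX => nX1 hXS; case/andP: hY => nY1 hYS.
have dXY := trivIsetP htriv X Y hXS hYS nXY.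
have dX1 := trivIsetP htriv X _ hXS h1 nX1.
have dY1 := trivIsetP htriv Y _ hYS h1 nY1.
have [x hx] : exists x, x \in X.
  by apply/set0Pn; apply: contraNneq h0 => <-.
have [y hy] : exists y, y \in Y.
  by apply/set0Pn; apply: contraNneq h0 => <-.
have nx : x != 1 by apply: contraTneq hx => ->; rewrite (disjointFl dX1) // set11.
have ny : y != 1 by apply: contraTneq hy => ->; rewrite (disjointFl dY1) // set11.
have hyX : y \notin X by rewrite (disjointFl dXY).
have := aut_det pr og hXS hx nx hyX ny hk hk' e1. by apply.
Qed.

End Main.

Theorem lemma2p8 (gT : finGroupType) (S : {set {set gT}}) :
  prime #|[set: gT]| -> is_Sring S ->
  (#|[set: gT]| <= 3 \/ 2 < #|S|) ->
  two_isolated (AutS S).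
Proof.
move=> prS [hpart h1 _ _] hcase K' heq.
have pr : prime #|gT| by rewrite -cardsT.
have [g og] : exists g : gT, #[g]%g = #|gT|.
  case/cyclicP: (prime_cyclic prS) => g hg; exists g.
  by rewrite /order -hg cardsT.
have hc : (#|gT| <= 3 \/ 2 < #|S|)%N by rewrite -cardsT.
have det := det_all pr og hpart h1 hc.
have s1 := sub1 heq.
apply/eqP; rewrite eqEsubset s1 /=.
apply/subsetP => k hk.
case: (orb_other (1, g)%g (esym heq)) => cd hcd.
have m1 : (1, g)%g \in orb (AutS S) (1, g)%g.
  by apply/imsetP; exists 1%g; rewrite ?one_aut ?perm1.
have m2 : (k 1, k g)%g \in orb (AutS S) (1, g)%g by apply/imsetP; exists k.
rewrite hcd in m1 m2.
case/imsetP: m1 => h hh [ea eb]; case/imsetP: m2 => h' hh' [ea' eb'].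
have hk' : (h^-1 * h')%g \in K' by rewrite groupM ?groupV.
have -> : k = (h^-1 * h')%g.
  apply: det => //; first by apply: (subsetP s1).
    by rewrite permM [in RHS]ea permK -ea'.
  by rewrite permM [in RHS]eb permK -eb'.
by [].
Qed.
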